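(* Let $i\in\{1,\dots,M\}$, $j\in\{1,\dots,N\}$, and let $e_0=(1,0,0,\dots)^\top$. For every $z\in\mathbb{C}\setminus\mathbb{N}_0$ the following hold: $$(a_i-1)\big({}_iT^{-1}S\big)S^{-1}\,Q(z)=(z+a_i-1)\,{}_iT^{-1}Q(z)-({}_iT^{-1}H_0)\,e_0,$$ $$b_j\big(T_j^{-1}S\big)S^{-1}\,Q(z)=(z+b_j)\,T_j^{-1}Q(z)-(T_j^{-1}H_0)\,e_0,$$ $$\big(T^{-1}S\big)BS^{-1}\big(\Upsilon Q(z-1)-P(z-1)\big)=z\,T^{-1}Q(z)-T^{-1}P(z)-(T^{-1}H_0)\,e_0,$$ where $\Upsilon:=\eta\,\prod_{i=1}^M(a_i-1)\big/\prod_{j=1}^N(b_j-1)$.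
   Context: Fix integers $M,N\ge0$ and parameters $\eta,a_1,\dots,a_M,b_1,\dots,b_N$. Let $w(z)=\frac{(a_1)_z\cdots(a_M)_z}{\Gamma(z+1)(b_1)_z\cdots(b_N)_z}\eta^z$, $(\alpha)_z=\Gamma(\alpha+z)/\Gamma(\alpha)$, on nodes $k\in\mathbb{N}_0$ (so $w(0)=1$), with finite moments $\rho_n=\sum_kk^nw(k)$ and moment matrix $G=(\rho_{n+m})$ admitting the Cholesky factorization $G=S^{-1}HS^{-\top}$ ($S$ lower unitriangular, $H=\operatorname{diag}(H_0,H_1,\dots)$). $P(z)=S\chi(z)$, $\chi(z)=(1,z,z^2,\dots)^\top$, is the vector of monic orthogonal polynomials $P_n$, and $Q(z)=(Q_0(z),Q_1(z),\dots)^\top$ with second kind functions $Q_n(z)=\sum_{k=0}^\infty\frac{P_n(k)w(k)}{z-k}$. $B$ is the lower Pascal matrix $B_{n,m}=\binom nm$. Inverse parameter shifts: ${}_iT^{-1}f$ is $f$ with $a_i$ replaced by $a_i-1$; $T_j^{-1}f$ is $f$ with $b_j$ replaced by $b_j+1$; $T^{-1}f$ is $f$ with every $a_i$ replaced by $a_i-1$ and every $b_j$ by $b_j-1$ (applied to $S,H_0,P,Q$, the weight, etc.). It is assumed that the parameters are such that all these shifted weights are well defined with finite moments and the Cholesky factorizations of all the shifted moment matrices exist. *)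

(* Defs.v *)
From HB Require Import structures.
From mathcomp Require Import all_boot all_order all_algebra.
From mathcomp Require Import all_classical all_reals all_analysis.
From mathcomp Require Import complex.
Set Implicit Arguments. Unset Strict Implicit. Unset Printing Implicit Defensive.
Import Order.TTheory GRing.Theory Num.Theory.
Import numFieldNormedType.Exports.
Local Open Scope ring_scope.
Local Open Scope complex_scope.
Local Open Scope classical_set_scope.

(* standard (modulus) normed-module / topological structure on the complex
   numbers R[i], viewed as a normed space over themselves *)
HB.instance Definition _ (R : rcfType) := NormedModule.copy R[i] R[i]^o.

Section Defs.
Variable R : realType.
Local Notation C := R[i].

Definition rising (x : C) (k : nat) : C := \prod_(l < k) (x + l%:R).

Definition hweight (M N : nat) (eta : C) (a : 'I_M -> C) (b : 'I_N -> C)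
  (k : nat) : C :=
  (\prod_(l < M) rising (a l) k) / (k`!%:R * \prod_(l < N) rising (b l) k)
  * eta ^+ k.

Definition moment_series (w : nat -> C) (n : nat) : nat -> C :=
  series (fun k => k%:R ^+ n * w k).

Definition moment (w : nat -> C) (n : nat) : C :=
  limn (moment_series w n).

Definition smat := nat -> nat -> C.
Definition svec := nat -> C.

Definition lower_unitriangular (S : smat) : Prop :=
  (forall n m, (n < m)%N -> S n m = 0) /\ (forall n, S n n = 1).

(* inverse of a lower unitriangular semi-infinite matrix, computed on
   the (n+1)x(n+1) leading block *)
Definition ltinv (S : smat) : smat := fun n m =>
  if (m <= n)%N then
    (invmx (\matrix_(p < n.+1, q < n.+1) S p q)) (inord n) (inord m)
  else 0.

(* product of a lower triangular matrix with a vector (only finitely many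
   nonzero terms in each row) *)
Definition lmulv (A : smat) (v : svec) : svec := fun n =>
  \sum_(k < n.+1) A n k * v k.

Definition pascal : smat := fun n m => 'C(n, m)%:R.

Definition e0 : svec := fun n => (n == 0)%:R.

(* G = S^{-1} H S^{-T}, S lower unitriangular, H = diag(H_0, H_1, ...) with
   nonzero H_n, G = (rho_{n+m}) *)
Definition cholesky (w : nat -> C) (S : smat) (H : nat -> C) : Prop :=
  lower_unitriangular S /\ (forall n, H n != 0) /\
  forall n m, moment w (n + m) =
    \sum_(k < n.+1) ltinv S n k * H k * ltinv S m k.

(* the weight is well defined (no (b_j)_k vanishes), has finite moments, and
   its moment matrix has the Cholesky factorization given by S, H *)
Definition admissible (M N : nat) (eta : C) (a : 'I_M -> C) (b : 'I_N -> C)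
  (S : smat) (H : nat -> C) : Prop :=
  (forall (l : 'I_N) (k : nat), rising (b l) k != 0) /\
  (forall n, cvgn (moment_series (hweight eta a b) n)) /\
  cholesky (hweight eta a b) S H.

Definition Pvec (S : smat) (z : C) : svec := fun n =>
  \sum_(m < n.+1) S n m * z ^+ m.

Definition Qvec (S : smat) (w : nat -> C) (z : C) : svec := fun n =>
  limn (series (fun k => Pvec S k%:R n * w k / (z - k%:R))).

Definition shift_a_down (M : nat) (i : 'I_M) (a : 'I_M -> C) : 'I_M -> C :=
  fun l => if l == i then a l - 1 else a l.
Definition shift_b_up (N : nat) (j : 'I_N) (b : 'I_N -> C) : 'I_N -> C :=
  fun l => if l == j then b l + 1 else b l.
Definition all_down (M : nat) (a : 'I_M -> C) : 'I_M -> C := fun l => a l - 1.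

End Defs.

(* Main.v *)
Require Import Defs.
From HB Require Import structures.
From mathcomp Require Import all_boot all_order all_algebra.
From mathcomp Require Import all_classical all_reals all_analysis.
From mathcomp Require Import complex.
From mathcomp Require Import ring lra.
Import Order.TTheory GRing.Theory Num.Theory.
Import numFieldNormedType.Exports.
Local Open Scope ring_scope.
Local Open Scope complex_scope.
Local Open Scope classical_set_scope.


Section A.
Variable R : realType.
Local Notation C := R[i].

Lemma ltinv_left (S : smat R) : lower_unitriangular S -> forall n m, (m <= n)%N ->
  \sum_(k < n.+1) ltinv S n k * S k m = (n == m)%:R.
Proof.
move=> [Sl Sd] n m mn.
set A := \matrix_(p < n.+1, q < n.+1) S p q.
have uA : A \in unitmx.
  rewrite unitmxE det_trig; last by apply/is_trig_mxP => i j ij; rewrite mxE Sl.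
  by rewrite (eq_bigr (fun=> 1)) ?prodr_const ?expr1n ?unitr1 // => i _; rewrite mxE Sd.
have := mulVmx uA => /matrixP/(_ (inord n) (inord m)).
rewrite !mxE -val_eqE /= !inordK ?ltnS // => <-.
apply: eq_bigr => k _.
rewrite /ltinv -ltnS ltn_ord inord_val mxE inordK //.
Qed.

Lemma ltinv_up (S : smat R) n m : (n < m)%N -> ltinv S n m = 0.
Proof. by rewrite /ltinv ltnNge => /negbTE ->. Qed.

Lemma ltinv_right (S : smat R) : lower_unitriangular S -> forall n m, (m <= n)%N ->
  \sum_(k < n.+1) S n k * ltinv S k m = (n == m)%:R.
Proof.
move=> Sh n m mn.
have [Sl Sd] := Sh.
set A := \matrix_(p < n.+1, q < n.+1) S p q.
set B := \matrix_(p < n.+1, q < n.+1) ltinv S p q.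
have BA : B *m A = 1%:M.
  apply/matrixP => p q; rewrite !mxE.
  have [qp|pq] := leqP q p.
    rewrite -(@ltinv_left S Sh p q qp).
    rewrite (bigID (fun k : 'I_n.+1 => (k <= p)%N)) /=.
    rewrite [X in _ + X]big1 ?addr0; last first.
      by move=> k; rewrite -ltnNge => pk; rewrite mxE ltinv_up // mul0r.
    have pn : (p < n.+1)%N by [].
    rewrite (@big_ord_widen_cond _ _ _ p.+1 n.+1 xpredT (fun k => ltinv S p k * S k q) pn) /=.
    by apply: eq_big => k; rewrite ?ltnS // => _; rewrite !mxE.
  have /negbTE -> : p != q by rewrite -val_eqE /= ltn_eqF.
  rewrite big1 // => k _.
  rewrite !mxE.
  have [kp|pk] := leqP k p; last by rewrite ltinv_up // mul0r.
  by rewrite Sl ?mulr0 // (leq_ltn_trans kp pq).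
have := mulmx1C BA => /matrixP/(_ (inord n) (inord m)).
rewrite !mxE -val_eqE /= !inordK ?ltnS // => <-.
apply: eq_bigr => k _.
by rewrite !mxE !inordK.
Qed.
End A.


Section B.
Variable R : realType.
Local Notation C := R[i].

Lemma cvgD_C (u v : nat -> C) : cvgn u -> cvgn v -> cvgn (u + v).
Proof. move=> cu cv. exact: (is_cvgD (K:=C) (V:=C) cu cv). Qed.
Lemma limD_C (u v : nat -> C) : cvgn u -> cvgn v -> limn (u + v) = limn u + limn v.
Proof. move=> cu cv. exact: (limD (K:=C) (V:=C) cu cv). Qed.
Lemma cvgZ_C (c : C) (u : nat -> C) : cvgn u -> cvgn (fun k => c * u k).
Proof. move=> cu. have h := (is_cvgZr (K:=C) (V:=C) (k:=c) cu). exact: (h _). Qed.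
Lemma limZ_C (c : C) (u : nat -> C) : cvgn u -> limn (fun k => c * u k) = c * limn u.
Proof. move=> cu. have h := (limZr (K:=C) (V:=C) c cu). exact: (h _). Qed.
Lemma cvgcst_C (c : C) : cvgn (fun _ : nat => c).
Proof. exact: (is_cvg_cst (U:=C)). Qed.
Lemma limcst_C (c : C) : limn (fun _ : nat => c) = c.
Proof. exact: (lim_cst (T:=C)). Qed.

Lemma lim_lin (n : nat) (c : 'I_n -> C) (u : 'I_n -> nat -> C) :
  (forall m, cvgn (u m)) ->
  cvgn (fun k => \sum_(m < n) c m * u m k) /\
  limn (fun k => \sum_(m < n) c m * u m k) = \sum_(m < n) c m * limn (u m).
Proof.
elim: n c u => [|n IH] c u cu.
  have -> : (fun k => \sum_(m < 0) c m * u m k) = fun=> 0.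
    by apply/funext => k /=; rewrite big_ord0.
  by rewrite big_ord0; split; [apply: cvgcst_C | apply: limcst_C].
have -> : (fun k => \sum_(m < n.+1) c m * u m k) = 
   (fun k => \sum_(m < n) c (widen_ord (leqnSn n) m) * u (widen_ord (leqnSn n) m) k)
    + (fun k => c ord_max * u ord_max k).
  by rewrite funeqE => k /=; rewrite big_ord_recr.
case: (IH (fun m => c (widen_ord (leqnSn n) m)) (fun m => u (widen_ord (leqnSn n) m))
   (fun m => cu (widen_ord (leqnSn n) m))) => c1 l1.
have c2 := (cvgZ_C (c ord_max) (u ord_max) (cu ord_max)).
split; first exact: (cvgD_C _ _ c1 c2).
by rewrite (limD_C _ _ c1 c2) l1 big_ord_recr /= (limZ_C _ _ (cu ord_max)).
Qed.

Lemma series_sum (n : nat) (c : 'I_n -> C) (f : 'I_n -> nat -> C) :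
  series (fun k => \sum_(m < n) c m * f m k) = fun N => \sum_(m < n) c m * series (f m) N.
Proof.
rewrite funeqE => N /=; rewrite /series /= exchange_big /=.
by apply: eq_bigr => m _; rewrite mulr_sumr.
Qed.

Lemma lim_series_lin (n : nat) (c : 'I_n -> C) (f : 'I_n -> nat -> C) :
  (forall m, cvgn (series (f m))) ->
  cvgn (series (fun k => \sum_(m < n) c m * f m k)) /\
  limn (series (fun k => \sum_(m < n) c m * f m k)) = \sum_(m < n) c m * limn (series (f m)).
Proof. by move=> cf; rewrite (series_sum _ c f); exact: (lim_lin _ c (fun m => series (f m)) cf). Qed.

Lemma lmulv_series (A : smat R) (F : nat -> nat -> C) n :
  (forall p, cvgn (series (F p))) ->
  cvgn (series (fun t => lmulv A (F^~ t) n)) /\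
  lmulv A (fun p => limn (series (F p))) n = limn (series (fun t => lmulv A (F^~ t) n)).
Proof.
move=> cF; rewrite /lmulv.
have [h1 h2] := lim_series_lin _ (fun k : 'I_n.+1 => A n k) (fun k : 'I_n.+1 => F k) (fun k => cF k).
by split => //; rewrite h2.
Qed.

Lemma lim_series_comb (al be : C) (f g : nat -> C) :
  cvgn (series f) -> cvgn (series g) ->
  limn (series (fun t => al * f t + be * g t)) = al * limn (series f) + be * limn (series g).
Proof.
move=> cf cg.
have -> : series (fun t => al * f t + be * g t) =
   (fun N => al * series f N) + (fun N => be * series g N).
  by rewrite funeqE => N /=; rewrite /series /= big_split /= -!mulr_sumr.
by rewrite (limD_C _ _ (cvgZ_C al _ cf) (cvgZ_C be _ cg)) (limZ_C _ _ cf) (limZ_C _ _ cg).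
Qed.

Lemma cvg_series_comb (al be : C) (f g : nat -> C) :
  cvgn (series f) -> cvgn (series g) ->
  cvgn (series (fun t => al * f t + be * g t)).
Proof.
move=> cf cg.
have -> : series (fun t => al * f t + be * g t) =
   (fun N => al * series f N) + (fun N => be * series g N).
  by rewrite funeqE => N /=; rewrite /series /= big_split /= -!mulr_sumr.
exact: (cvgD_C _ _ (cvgZ_C al _ cf) (cvgZ_C be _ cg)).
Qed.
End B.


Section Cv.
Variable R : realType.
Local Notation C := R[i].

Lemma telesc (n : nat) : \sum_(0 <= k < n) ((k.+1 * k.+2)%:R : R)^-1 = 1 - (n.+1%:R)^-1.
Proof.
elim: n => [|n IH]; first by rewrite big_geq // invr1 subrr.
rewrite big_nat_recr //= IH.
have h1 : (n.+1%:R : R) != 0 by rewrite pnatr_eq0.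
have h2 : (n.+2%:R : R) != 0 by rewrite pnatr_eq0.
rewrite natrM.
field.
by have := ler0n R n; move=> ?; apply/andP; split; apply: lt0r_neq0; lra.
Qed.

Lemma real_series_bound (r : nat -> R) (K : R) :
  (forall k, `|r k| * (k.+1 * k.+2)%:R <= K) -> cvgn (series r).
Proof.
move=> hK.
apply: normed_cvg.
apply: nondecreasing_is_cvgn.
  by apply: (@nondecreasing_series R (fun k => `|r k|) xpredT 0) => n _ _.
exists K => _ [n _ <-] /=.
have K0 : 0 <= K by apply: le_trans (hK 0%N); rewrite mulr_ge0.
apply: (@le_trans _ _ (\sum_(0 <= k < n) K * ((k.+1 * k.+2)%:R)^-1)).
  apply: ler_sum => k _.
  by rewrite ler_pdivlMr ?ltr0n ?muln_gt0.
rewrite -mulr_sumr telesc.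
rewrite mulrBr mulr1.
have : 0 <= K * (n.+1%:R)^-1 by rewrite mulr_ge0 // invr_ge0 ler0n.
move=> h; rewrite lerBlDr lerDl h //.
Qed.

Lemma cvg_ReIm (u : nat -> C) (x y : R) :
  (fun n => complex.Re (u n)) @ \oo --> x -> (fun n => complex.Im (u n)) @ \oo --> y ->
  u @ \oo --> (x +i* y).
Proof.
move=> hx hy.
apply/(@cvgrPdist_lt C C) => e e0.
move: (e0); rewrite ltcE /= => /andP[/eqP eIm eRe].
set E := complex.Re e in eRe *.
have e0' : 0 < E / 2 by rewrite divr_gt0.
have [N1 _ H1] := (cvgr_dist_lt (K:=R) (V:=R) _ _ hx _ e0').
have [N2 _ H2] := (cvgr_dist_lt (K:=R) (V:=R) _ _ hy _ e0').
exists (maxn N1 N2) => // n /= hn.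
have h1 := H1 n (leq_trans (leq_maxl _ _) hn).
have h2 := H2 n (leq_trans (leq_maxr _ _) hn).
move: h1 h2; case: (u n) => a b /= h1 h2.
rewrite normc_def /= ltcE /= eIm eqxx /=.
apply: (@le_lt_trans _ _ (`|x - a| + `|y - b|)); last by lra.
have s0 : 0 <= `|x - a| + `|y - b| by rewrite addr_ge0.
rewrite -[X in _ <= X](ger0_norm s0) -sqrtr_sqr ler_sqrt ?sqr_ge0 //.
have e1 := real_normK (num_real (x - a)).
have e2 := real_normK (num_real (y - b)).
have p1 := normr_ge0 (x - a). have p2 := normr_ge0 (y - b).
move: e1 e2 p1 p2; move: (`|x - a|) (`|y - b|) (x - a) (y - b) => p q c d e1 e2 p1 p2.
nra.
Qed.

Lemma normReIm (x : C) : `|complex.Re x| <= complex.Re `|x| /\ `|complex.Im x| <= complex.Re `|x|.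
Proof.
case: x => a b; rewrite normc_def /=.
have h0 : 0 <= a ^+ 2 + b ^+ 2 by rewrite addr_ge0 ?sqr_ge0.
split; rewrite -sqrtr_sqr ler_sqrt //; [rewrite lerDl | rewrite lerDr]; exact: sqr_ge0.
Qed.

Lemma series_ReIm (u : nat -> C) N :
  series u N = (series (fun k => complex.Re (u k)) N) +i* (series (fun k => complex.Im (u k)) N).
Proof.
rewrite /series /=; elim: N => [|N IH]; first by rewrite !big_geq.
by rewrite !big_nat_recr //= IH; case: (u N).
Qed.

Lemma cvg_series_bound (u : nat -> C) (K : R) :
  (forall k, `|u k| * (k.+1 * k.+2)%:R <= K%:C) -> cvgn (series u).
Proof.
move=> hK.
have hb : forall k, complex.Re `|u k| * (k.+1 * k.+2)%:R <= K.
  move=> k; rewrite -lecR; apply: le_trans (hK k).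
  rewrite rmorphM /= rmorph_nat /= ler_wpM2r //.
have hRe : cvgn (series (fun k => complex.Re (u k))).
  apply: (@real_series_bound _ K) => k; apply: le_trans (hb k).
  by rewrite ler_wpM2r // (normReIm (u k)).1.
have hIm : cvgn (series (fun k => complex.Im (u k))).
  apply: (@real_series_bound _ K) => k; apply: le_trans (hb k).
  by rewrite ler_wpM2r // (normReIm (u k)).2.
apply/cvg_ex; exists (limn (series (fun k => complex.Re (u k))) +i* limn (series (fun k => complex.Im (u k)))).
have -> : series u = fun N => series u N by [].
under eq_fun do rewrite series_ReIm.
exact: cvg_ReIm.
Qed.
End Cv.


Section D.
Variable R : realType.
Local Notation C := R[i].

Lemma ev_bound (f : nat -> C) N (c : C) :
  (forall k, (N <= k)%N -> `|f k| <= c) -> exists B : C, 0 <= B /\ forall k, `|f k| <= B.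
Proof.
move=> h.
have c0 : 0 <= c by apply: le_trans (h N (leqnn N)).
have s0 : 0 <= \sum_(j < N) `|f j| by apply: sumr_ge0.
exists (c + \sum_(j < N) `|f j|); split; first by rewrite addr_ge0.
move=> k; have [kN|Nk] := ltnP k N.
  rewrite (bigD1 (Ordinal kN)) //= addrA; apply: ler_wpDr; first exact: sumr_ge0.
  exact: ler_wpDl.
by apply: ler_wpDr => //; apply: h.
Qed.

Lemma term_bound (f : nat -> C) : cvgn (series f) -> exists B : C, 0 <= B /\ forall k, `|f k| <= B.
Proof.
move=> cf.
have h0 := cvg_series_cvg_0 (K:=C) (V:=C) cf.
have [N _ HN] := cvgr_dist_lt (K:=C) (V:=C) _ _ h0 _ ltr01.
apply: (@ev_bound _ N 1) => k /HN /=.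
by rewrite sub0r normrN => /ltW.
Qed.

Lemma inv_bound (z : C) :
  exists D : C, 0 <= D /\ forall k, `|(z - k%:R)^-1| <= D.
Proof.
set r : R := complex.Re `|z|.
have r0 : 0 <= r + 1.
  by rewrite /r normc_def /= addr_ge0 ?sqrtr_ge0.
apply: (@ev_bound _ (Num.bound (r + 1)) 1) => k hk.
have hz : `|z| = r%:C by rewrite /r normc_def.
have kr : r + 1 <= k%:R.
  apply: le_trans (ltW (archi_boundP r0)) _.
  by rewrite ler_nat.
have h1 : 1 <= `|z - k%:R|.
  rewrite distrC; apply: le_trans (lerB_dist _ _).
  rewrite normr_nat hz lerBrDr addrC.
  have : ((r + 1)%:C <= (k%:R : R)%:C) by rewrite lecR.
  by rewrite rmorphD rmorph1 rmorph_nat.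
rewrite normfV invf_le1 //.
exact: lt_le_trans ltr01 h1.
Qed.
Lemma Qterm_cvg (w : nat -> C) (z : C) m :
  (forall n, cvgn (moment_series w n)) ->
  cvgn (series (fun k => k%:R ^+ m * w k / (z - k%:R))).
Proof.
move=> hw.
have [B0 [B00 hB0]] := term_bound (fun k => k%:R ^+ m * w k) (hw m).
have [B1 [B10 hB1]] := term_bound (fun k => k%:R ^+ m.+1 * w k) (hw m.+1).
have [B2 [B20 hB2]] := term_bound (fun k => k%:R ^+ m.+2 * w k) (hw m.+2).
have [D [D0 hD]] := inv_bound z.
set K := (B2 + 3 * B1 + 2 * B0) * D.
have K0 : 0 <= K by rewrite /K mulr_ge0 // !addr_ge0 // mulr_ge0.
apply: (@cvg_series_bound _ _ (complex.Re K)) => k.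
rewrite RRe_real ?ger0_real //.
have e : k%:R ^+ m * w k / (z - k%:R) * (k.+1 * k.+2)%:R =
   (k%:R ^+ m.+2 * w k + 3 * (k%:R ^+ m.+1 * w k) + 2 * (k%:R ^+ m * w k)) * (z - k%:R)^-1.
  rewrite natrM -!natr1 !exprS; ring.
rewrite -[X in _ * X]normr_nat -normrM e normrM.
apply: ler_pM => //.
apply: le_trans (ler_normD _ _) _.
apply: lerD; last by rewrite normrM normr_nat ler_wpM2l.
apply: le_trans (ler_normD _ _) _.
by apply: lerD => //; rewrite normrM normr_nat ler_wpM2l.
Qed.
End D.


Section E.
Variable R : realType.
Local Notation C := R[i].

Lemma sum_widen (f : nat -> C) k p : (k <= p)%N -> (forall m, (k < m)%N -> f m = 0) ->
  \sum_(m < k.+1) f m = \sum_(m < p.+1) f m.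
Proof.
move=> kp hf; rewrite (big_ord_widen p.+1 f) ?ltnS //.
rewrite [RHS](bigID (fun m : 'I_p.+1 => (m < k.+1)%N)) /=.
rewrite [X in _ = _ + X]big1 ?addr0 // => m.
by rewrite ltnNge negbK => /hf.
Qed.

Lemma Linv_P (S : smat R) : lower_unitriangular S -> forall x p,
  lmulv (ltinv S) (Pvec S x) p = x ^+ p.
Proof.
move=> Sh x p; have [Sl Sd] := Sh.
rewrite /lmulv /Pvec.
have -> : \sum_(k < p.+1) ltinv S p k * \sum_(m < k.+1) S k m * x ^+ m =
          \sum_(k < p.+1) \sum_(m < p.+1) ltinv S p k * S k m * x ^+ m.
  apply: eq_bigr => k _.
  have kp : (k <= p)%N by rewrite -ltnS.
  rewrite (sum_widen (fun m => S k m * x ^+ m) k p kp); last first.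
    by move=> m km; rewrite Sl // mul0r.
  by rewrite mulr_sumr; apply: eq_bigr => m _; rewrite mulrA.
rewrite exchange_big /=.
rewrite (eq_bigr (fun m : 'I_p.+1 => (p == m)%:R * x ^+ m)); last first.
  move=> m _; rewrite -mulr_suml (ltinv_left _ _ Sh) //.
  by rewrite -ltnS.
rewrite big_ord_recr /= eqxx mul1r big1 ?add0r // => m _.
by rewrite eq_sym ltn_eqF ?mul0r.
Qed.

Lemma lmulvMr (A : smat R) (v : nat -> C) (g : C) p :
  lmulv A (fun q => v q * g) p = lmulv A v p * g.
Proof. by rewrite /lmulv mulr_suml; apply: eq_bigr => k _; rewrite mulrA. Qed.

Lemma lmulvB (A : smat R) (u v : nat -> C) p :
  lmulv A (fun q => u q - v q) p = lmulv A u p - lmulv A v p.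
Proof. by rewrite /lmulv -sumrB; apply: eq_bigr => k _; rewrite mulrBr. Qed.

Lemma pascal_pow (x : C) k : lmulv (pascal R) (fun p => x ^+ p) k = (x + 1) ^+ k.
Proof.
rewrite /lmulv /pascal exprD1n; apply: eq_bigr => p _.
by rewrite mulr_natl.
Qed.

Lemma lmulv_pow (A : smat R) (x : C) n : lmulv A (fun k => x ^+ k) n = Pvec A x n.
Proof. by []. Qed.

Lemma Pvec_w_sum (S : smat R) (g : nat -> C) n k :
  Pvec S k%:R n * g k = \sum_(m < n.+1) S n m * (k%:R ^+ m * g k).
Proof. by rewrite /Pvec mulr_suml; apply: eq_bigr => m _; rewrite mulrA. Qed.

Lemma Qseries_cvg (S : smat R) (w : nat -> C) (z : C) n :
  (forall n, cvgn (moment_series w n)) ->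
  cvgn (series (fun k => Pvec S k%:R n * w k / (z - k%:R))).
Proof.
move=> hw.
have -> : (fun k => Pvec S k%:R n * w k / (z - k%:R)) =
    fun k => \sum_(m < n.+1) S n m * (k%:R ^+ m * w k / (z - k%:R)).
  rewrite funeqE => k; rewrite -mulrA (Pvec_w_sum S (fun k => w k / (z - k%:R)) n k).
  by apply: eq_bigr => m _; rewrite !mulrA.
have [h _] := lim_series_lin _ _ (fun m : 'I_n.+1 => S n m)
   (fun (m : 'I_n.+1) k => k%:R ^+ m * w k / (z - k%:R)) (fun m => Qterm_cvg _ w z m hw).
exact: h.
Qed.

Lemma orth (S : smat R) (w : nat -> C) (H : nat -> C) :
  lower_unitriangular S -> (forall n, cvgn (moment_series w n)) -> cholesky w S H ->
  forall n, cvgn (series (fun k => Pvec S k%:R n * w k)) /\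
    limn (series (fun k => Pvec S k%:R n * w k)) = H 0%N * e0 R n.
Proof.
move=> Sh hw [_ [_ hc]] n.
have -> : (fun k => Pvec S k%:R n * w k) =
    fun k => \sum_(m < n.+1) S n m * (k%:R ^+ m * w k).
  by rewrite funeqE => k; rewrite (Pvec_w_sum S w n k).
have [h1 h2] := lim_series_lin _ _ (fun m : 'I_n.+1 => S n m)
   (fun (m : 'I_n.+1) k => k%:R ^+ m * w k) (fun m => hw m).
split => //; rewrite h2.
have L00 : ltinv S 0 0 = 1.
  have := ltinv_left _ _ Sh 0 0 (leqnn 0).
  by rewrite big_ord1 (proj2 Sh) mulr1.
have mom : forall m, limn (series (fun k => k%:R ^+ m * w k)) = ltinv S m 0 * H 0%N.
  move=> m; have := hc m 0%N; rewrite addn0 /moment /moment_series => ->.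
  rewrite big_ord_recl /= L00 mulr1 big1 ?addr0 // => k _.
  by rewrite (ltinv_up _ S 0 (bump 0 k)) ?mulr0.
rewrite (eq_bigr (fun m : 'I_n.+1 => S n m * ltinv S m 0 * H 0%N)); last first.
  by move=> m _; rewrite mom mulrA.
rewrite -mulr_suml (ltinv_right _ _ Sh) // /e0 mulrC.
by case: n {h1 h2}.
Qed.
End E.


Section F.
Variable R : realType.
Local Notation C := R[i].

Lemma rising_down (x : C) t : rising (x - 1) t.+1 = (x - 1) * rising x t.
Proof.
rewrite /rising big_ord_recl /=; congr (_ * _); first by ring.
by apply: eq_bigr => l _; rewrite /bump /= add1n -natr1; ring.
Qed.

Lemma rising_S (x : C) t : rising x t.+1 = rising x t * (x + t%:R).
Proof. by rewrite /rising big_ord_recr. Qed.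

Lemma rising_shift (x : C) t : (t%:R + x - 1) * rising (x - 1) t = (x - 1) * rising x t.
Proof. by rewrite -rising_down rising_S mulrC; congr (_ * _); ring. Qed.

Lemma fact_neq0 t : (t`!%:R : C) != 0.
Proof. by rewrite pnatr_eq0 -lt0n fact_gt0. Qed.

Lemma hw_a M N eta (a : 'I_M -> C) (b : 'I_N -> C) i t :
  (t%:R + a i - 1) * hweight eta (shift_a_down i a) b t = (a i - 1) * hweight eta a b t.
Proof.
rewrite /hweight.
have -> : \prod_(l < M) rising (shift_a_down i a l) t =
    rising (a i - 1) t * \prod_(l < M | l != i) rising (a l) t.
  rewrite (bigD1 i) //= /shift_a_down eqxx; congr (_ * _).
  by apply: eq_bigr => l /negbTE ->.
rewrite [\prod_(l < M) rising (a l) t](bigD1 i) //=.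
by rewrite !mulrA rising_shift.
Qed.

Lemma hw_b M N eta (a : 'I_M -> C) (b : 'I_N -> C) j t :
  (forall l k, rising (b l) k != 0) ->
  (t%:R + b j) * hweight eta a (shift_b_up j b) t = b j * hweight eta a b t.
Proof.
move=> hb.
rewrite /hweight.
have -> : \prod_(l < N) rising (shift_b_up j b l) t =
    rising (b j + 1) t * \prod_(l < N | l != j) rising (b l) t.
  rewrite (bigD1 j) //= /shift_b_up eqxx; congr (_ * _).
  by apply: eq_bigr => l /negbTE ->.
rewrite [\prod_(l < N) rising (b l) t](bigD1 j) //=.
have b0 : b j != 0 by have := hb j 1%N; rewrite /rising big_ord1 addr0.
have bt0 : b j + t%:R != 0 by have := hb j t.+1; rewrite rising_S mulf_eq0 negb_or => /andP[].
have r0 : rising (b j) t != 0 by [].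
have P0 : \prod_(l < N | l != j) rising (b l) t != 0 by apply/prodf_neq0 => l _.
have er : rising (b j + 1) t = rising (b j) t * (b j + t%:R) / b j.
  apply: (mulIf b0); rewrite mulfVK // mulrC.
  have := rising_down (b j + 1) t; rewrite addrK => <-.
  by rewrite rising_S.
rewrite er.
have F0 := fact_neq0 t.
field.
by rewrite F0 r0 P0 b0 bt0.
Qed.

Lemma hw_T M N eta (a : 'I_M -> C) (b : 'I_N -> C) t :
  (forall l k, rising (b l) k != 0) -> (forall l, b l - 1 != 0) ->
  eta * (\prod_(l < M) (a l - 1)) / (\prod_(l < N) (b l - 1)) * hweight eta a b t =
  t.+1%:R * hweight eta (all_down a) (all_down b) t.+1.
Proof.
move=> hb hb1.
rewrite /hweight /all_down.
rewrite [\prod_(l < M) rising _ t.+1](eq_bigr (fun l => (a l - 1) * rising (a l) t)); last by move=> l _; rewrite rising_down.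
rewrite [\prod_(l < N) rising _ t.+1](eq_bigr (fun l => (b l - 1) * rising (b l) t)); last by move=> l _; rewrite rising_down.
rewrite !big_split /= factS natrM exprS.
have F0 := fact_neq0 t.
have P0 : \prod_(l < N) rising (b l) t != 0 by apply/prodf_neq0 => l _.
have P1 : \prod_(l < N) (b l - 1) != 0 by apply/prodf_neq0 => l _.
have t0 : (t.+1%:R : C) != 0 by rewrite pnatr_eq0.
field.
by rewrite F0 P0 P1 addrC natr1 t0.
Qed.
End F.


Section G.
Variable R : realType.
Local Notation C := R[i].

Lemma lim_seriesZ_C (c : C) (f : nat -> C) : cvgn (series f) ->
  cvgn (series (fun t => c * f t)) /\ limn (series (fun t => c * f t)) = c * limn (series f).
Proof.
move=> cf.
have E : (fun t => c * f t) = (fun t => c * f t + 0 * f t).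
  by rewrite funeqE => t; rewrite mul0r addr0.
split; first by rewrite E; exact: (cvg_series_comb _ c 0 f f cf cf).
by rewrite E (lim_series_comb _ c 0 f f cf cf) mul0r addr0.
Qed.

Lemma lmulvMl (A : smat R) (v : nat -> C) (c : C) p :
  lmulv A (fun q => c * v q) p = c * lmulv A v p.
Proof. by rewrite /lmulv mulr_sumr; apply: eq_bigr => k _; rewrite mulrCA. Qed.

Lemma LQ (S : smat R) (w : nat -> C) (y : C) :
  lower_unitriangular S -> (forall n, cvgn (moment_series w n)) -> forall p,
  cvgn (series (fun t => t%:R ^+ p * (w t / (y - t%:R)))) /\
  lmulv (ltinv S) (Qvec S w y) p = limn (series (fun t => t%:R ^+ p * (w t / (y - t%:R)))).
Proof.
move=> Sh hw p.
have cF : forall q, cvgn (series (fun k => Pvec S k%:R q * w k / (y - k%:R))).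
  by move=> q; apply: Qseries_cvg.
have [c e] := lmulv_series _ (ltinv S) (fun q k => Pvec S k%:R q * w k / (y - k%:R)) p cF.
have E : (fun t => lmulv (ltinv S) ((fun q k => Pvec S k%:R q * w k / (y - k%:R))^~ t) p) =
         (fun t => t%:R ^+ p * (w t / (y - t%:R))).
  rewrite funeqE => t.
  transitivity (lmulv (ltinv S) (Pvec S t%:R) p * (w t / (y - t%:R))).
    by rewrite /lmulv mulr_suml; apply: eq_bigr => k _; rewrite !mulrA.
  by rewrite (Linv_P _ _ Sh).
rewrite E in c e; split => //.
Qed.

Lemma AP (A : smat R) (x : nat -> C) (g : nat -> C) n :
  (forall p, cvgn (series (fun t => x t ^+ p * g t))) ->
  cvgn (series (fun t => Pvec A (x t) n * g t)) /\
  lmulv A (fun p => limn (series (fun t => x t ^+ p * g t))) n =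
    limn (series (fun t => Pvec A (x t) n * g t)).
Proof.
move=> cF.
have [c e] := lmulv_series _ A (fun p t => x t ^+ p * g t) n cF.
have E : (fun t => lmulv A ((fun p t => x t ^+ p * g t)^~ t) n) = (fun t => Pvec A (x t) n * g t).
  by rewrite funeqE => t /=; rewrite (lmulvMr _ A (fun p => x t ^+ p)).
by rewrite E in c e.
Qed.

Lemma APp (x : nat -> C) (g : nat -> C) k :
  (forall p, cvgn (series (fun t => x t ^+ p * g t))) ->
  cvgn (series (fun t => (x t + 1) ^+ k * g t)) /\
  lmulv (pascal R) (fun p => limn (series (fun t => x t ^+ p * g t))) k =
    limn (series (fun t => (x t + 1) ^+ k * g t)).
Proof.
move=> cF.
have [c e] := lmulv_series _ (pascal R) (fun p t => x t ^+ p * g t) k cF.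
have E : (fun t => lmulv (pascal R) ((fun p t => x t ^+ p * g t)^~ t) k) =
   (fun t => (x t + 1) ^+ k * g t).
  by rewrite funeqE => t /=; rewrite (lmulvMr _ (pascal R) (fun p => x t ^+ p)) pascal_pow.
by rewrite E in c e.
Qed.

Lemma lim_shift (h : nat -> C) : h 0%N = 0 -> cvgn (series h) ->
  limn (series (fun t => h t.+1)) = limn (series h).
Proof.
move=> h0 ch.
have E : series (fun t => h t.+1) = (fun N => series h N.+1).
  by rewrite funeqE => N; rewrite /series /= big_nat_recl // h0 add0r.
rewrite E.
have H : (fun N => series h N.+1) @ \oo --> limn (series h).
  by rewrite (cvg_shiftS (series h)).
exact: (cvg_lim (T:=C) _ H).
Qed.
End G.


Theorem mainTheorem5 (R : realType) (M N : nat) (eta : R[i])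
  (a : 'I_M -> R[i]) (b : 'I_N -> R[i]) (i : 'I_M) (j : 'I_N)
  (S : smat R) (H : nat -> R[i])
  (Sa : smat R) (Ha : nat -> R[i])
  (Sb : smat R) (Hb : nat -> R[i])
  (ST : smat R) (HT : nat -> R[i]) :
  admissible eta a b S H ->
  admissible eta (shift_a_down i a) b Sa Ha ->
  admissible eta a (shift_b_up j b) Sb Hb ->
  admissible eta (all_down a) (all_down b) ST HT ->
  forall z : R[i], (forall k : nat, z != k%:R) ->
  let w := hweight eta a b in
  let Q := Qvec S w in
  let Qa := Qvec Sa (hweight eta (shift_a_down i a) b) in
  let Qb := Qvec Sb (hweight eta a (shift_b_up j b)) in
  let QT := Qvec ST (hweight eta (all_down a) (all_down b)) in
  let Ups := eta * (\prod_(l < M) (a l - 1)) / (\prod_(l < N) (b l - 1)) in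
  (forall n, (a i - 1) * lmulv Sa (lmulv (ltinv S) (Q z)) n
             = (z + a i - 1) * Qa z n - Ha 0%N * e0 R n) /\
  (forall n, b j * lmulv Sb (lmulv (ltinv S) (Q z)) n
             = (z + b j) * Qb z n - Hb 0%N * e0 R n) /\
  (forall n, lmulv ST (lmulv (pascal R) (lmulv (ltinv S)
                (fun m => Ups * Q (z - 1) m - Pvec S (z - 1) m))) n
             = z * QT z n - Pvec ST z n - HT 0%N * e0 R n).
Proof.
move=> [hb [hw chol]] [hba [hwa chola]] [hbb [hwb cholb]] [hbT [hwT cholT]] z zk w Q Qa Qb QT Ups.
have [Sh _] := chol. have [Sah _] := chola. have [Sbh _] := cholb. have [STh _] := cholT.
set g := fun t : nat => w t / (z - t%:R).
have cg : forall p, cvgn (series (fun t => t%:R ^+ p * g t)).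
  by move=> p; exact: (proj1 (LQ _ S w z Sh hw p)).
have LQz : lmulv (ltinv S) (Q z) = fun p => limn (series (fun t => t%:R ^+ p * g t)).
  by rewrite funeqE => p; exact: (proj2 (LQ _ S w z Sh hw p)).
split; [|split].
- move=> n.
  rewrite LQz.
  have [c1 e1] := AP _ Sa (fun t => t%:R) g n cg.
  rewrite e1.
  have [co eo] := orth _ Sa _ Ha Sah hwa chola n.
  rewrite -eo.
  have cQa := Qseries_cvg _ Sa (hweight eta (shift_a_down i a) b) z n hwa.
  rewrite /Qa /Qvec.
  rewrite -(proj2 (lim_seriesZ_C _ _ _ c1)).
  have := lim_series_comb _ (z + a i - 1) (-1) _ _ cQa co.
  rewrite mulN1r => <-.
  congr (limn (series _)); rewrite funeqE => t.
  have E := hw_a _ _ _ eta a b i t.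
  have hz : z - t%:R != 0 by rewrite subr_eq0.
  rewrite /g.
  transitivity (Pvec Sa t%:R n / (z - t%:R) * ((a i - 1) * w t)); first by ring.
  rewrite /w -E.
  field.
  exact: hz.
- move=> n.
  rewrite LQz.
  have [c1 e1] := AP _ Sb (fun t => t%:R) g n cg.
  rewrite e1.
  have [co eo] := orth _ Sb _ Hb Sbh hwb cholb n.
  rewrite -eo.
  have cQb := Qseries_cvg _ Sb (hweight eta a (shift_b_up j b)) z n hwb.
  rewrite /Qb /Qvec.
  rewrite -(proj2 (lim_seriesZ_C _ _ _ c1)).
  have := lim_series_comb _ (z + b j) (-1) _ _ cQb co.
  rewrite mulN1r => <-.
  congr (limn (series _)); rewrite funeqE => t.
  have E := hw_b _ _ _ eta a b j t hb.
  have hz : z - t%:R != 0 by rewrite subr_eq0.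
  rewrite /g.
  transitivity (Pvec Sb t%:R n / (z - t%:R) * (b j * w t)); first by ring.
  rewrite /w -E.
  field.
  exact: hz.
- move=> n.
  have hb1 : forall l, b l - 1 != 0.
    by move=> l; have := hbT l 1%N; rewrite /rising big_ord1 /all_down addr0.
  have z0 : z != 0 by have := zk 0%N.
  set g' := fun t : nat => Ups * (w t / (z - 1 - t%:R)).
  have cg1 : forall p, cvgn (series (fun t => t%:R ^+ p * (w t / (z - 1 - t%:R)))).
    by move=> p; exact: (proj1 (LQ _ S w (z - 1) Sh hw p)).
  have eg' : forall p, (fun t => t%:R ^+ p * g' t) = (fun t => Ups * (t%:R ^+ p * (w t / (z - 1 - t%:R)))).
    by move=> p; rewrite funeqE => t; rewrite /g' mulrCA.
  have cg' : forall p, cvgn (series (fun t => t%:R ^+ p * g' t)).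
    by move=> p; rewrite eg'; exact: (proj1 (lim_seriesZ_C _ Ups _ (cg1 p))).
  have step1 : lmulv (ltinv S) (fun m => Ups * Q (z - 1) m - Pvec S (z - 1) m) =
      fun p => limn (series (fun t => t%:R ^+ p * g' t)) - (z - 1) ^+ p.
    rewrite funeqE => p.
    rewrite (lmulvB _ (ltinv S) (fun m => Ups * Q (z - 1) m) (Pvec S (z - 1)) p).
    rewrite (lmulvMl _ (ltinv S) (Q (z - 1)) Ups p) (Linv_P _ _ Sh).
    rewrite (proj2 (LQ _ S w (z - 1) Sh hw p)) eg'.
    by rewrite (proj2 (lim_seriesZ_C _ Ups _ (cg1 p))).
  rewrite step1.
  have step2 : lmulv (pascal R) (fun p => limn (series (fun t => t%:R ^+ p * g' t)) - (z - 1) ^+ p) =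
      fun k => limn (series (fun t => (t%:R + 1) ^+ k * g' t)) - z ^+ k.
    rewrite funeqE => k.
    rewrite (lmulvB _ (pascal R) (fun p => limn (series (fun t => t%:R ^+ p * g' t))) (fun p => (z - 1) ^+ p) k).
    by rewrite pascal_pow subrK (proj2 (APp _ (fun t => t%:R) g' k cg')).
  rewrite step2.
  have cg2 : forall k, cvgn (series (fun t => (t%:R + 1) ^+ k * g' t)).
    by move=> k; exact: (proj1 (APp _ (fun t => t%:R) g' k cg')).
  rewrite (lmulvB _ ST (fun k => limn (series (fun t => (t%:R + 1) ^+ k * g' t))) (fun k => z ^+ k) n).
  rewrite lmulv_pow (proj2 (AP _ ST (fun t => t%:R + 1) g' n cg2)).
  set WT := hweight eta (all_down a) (all_down b).
  set h := fun s : nat => z * (Pvec ST s%:R n * WT s / (z - s%:R)) + -1 * (Pvec ST s%:R n * WT s).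
  have cQT := Qseries_cvg _ ST WT z n hwT.
  have [coT eoT] := orth _ ST _ HT STh hwT cholT n.
  have ch : cvgn (series h) by exact: (cvg_series_comb _ z (-1) _ _ cQT coT).
  have lh : limn (series h) = z * QT z n + -1 * (HT 0%N * e0 R n).
    by rewrite (lim_series_comb _ z (-1) _ _ cQT coT) eoT.
  have h0 : h 0%N = 0.
    rewrite /h subr0; field; exact: z0.
  have eh : (fun t => Pvec ST (t%:R + 1) n * g' t) = (fun t => h t.+1).
    rewrite funeqE => t.
    have hz1 : z - 1 - t%:R != 0.
      apply: contra (zk t.+1) => /eqP e.
      have e2 : z - (t%:R + 1) = 0 by transitivity (z - 1 - t%:R); [ring | exact: e].
      by move/eqP: e2; rewrite subr_eq0 natr1.
    rewrite /h /g' -natr1.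
    transitivity (Pvec ST (t%:R + 1) n / (z - 1 - t%:R) * (Ups * w t)); first by ring.
    rewrite /Ups /w (hw_T _ _ _ eta a b t hb hb1) -natr1 -/WT.
    field.
    by have -> : z - (t%:R + 1) = z - 1 - t%:R by ring.
  rewrite eh (lim_shift _ h h0 ch) lh.
  by rewrite mulN1r addrAC.
Qed.
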